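(* Let $w$ be the fixed point of the morphism $\psi$ on $\{0,1\}^*$ given by $\psi(1)=100$, $\psi(0)=10$ (i.e. $w=\lim_{k\to\infty}\psi^k(1)=1001010100101\cdots$), written $w=w_1w_2w_3\cdots$. Then for all $n\ge1$, $$w_n=\mathrm{St}\big(\sqrt2-1,\;1-\tfrac12\sqrt2\big)_n=\Big\lfloor (n+1)(\sqrt2-1)+1-\tfrac12\sqrt2\Big\rfloor-\Big\lfloor n(\sqrt2-1)+1-\tfrac12\sqrt2\Big\rfloor.$$
   Context: $\mathrm{St}(\alpha,\beta)_n=\lfloor (n+1)\alpha+\beta\rfloor-\lfloor n\alpha+\beta\rfloor$ for $n=1,2,\dots$; the letters of $w$ are indexed starting from $1$. *)

(* Defs.v *)
From Stdlib Require Import Reals List ZArith.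
Import ListNotations.
Open Scope R_scope.

(* floor x : the largest integer <= x.  Stdlib's Int_part x = up x - 1 is
   exactly the floor (up x is the unique integer with x < up x <= x + 1). *)
Definition floor (x : R) : Z := Int_part x.

Definition St (alpha beta : R) (n : nat) : Z :=
  (floor (INR (S n) * alpha + beta) - floor (INR n * alpha + beta))%Z.

Definition psi_letter (a : nat) : list nat :=
  match a with
  | 0 => [1; 0]%nat
  | _ => [1; 0; 0]%nat
  end.

Definition psi (u : list nat) : list nat := flat_map psi_letter u.

Definition psi_iter (k : nat) : list nat := Nat.iter k psi [1%nat].

(* The fixed point w = lim psi^k(1), indexed from 1.  Since psi^k(1) is a prefix
   of psi^(k+1)(1) and |psi^k(1)| >= k+1, the letter w_n (n >= 1) is the
   (n-1)-th (0-based) letter of psi^n(1). *)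
Definition w (n : nat) : nat := nth (n - 1)%nat (psi_iter n) 0%nat.

(* Main.v *)
Require Import Defs.
From Stdlib Require Import Reals List ZArith Lra Lia Psatz.
Import ListNotations.
Open Scope R_scope.

Definition a := sqrt 2 - 1.
Definition b := 1 - / 2 * sqrt 2.
Definition fl (n:nat) : Z := Defs.floor (INR n * a + b)%R.

Lemma r2 : sqrt 2 * sqrt 2 = 2. Proof. apply sqrt_sqrt; lra. Qed.
Lemma rbounds : 1.41 < sqrt 2 < 1.42.
Proof. pose proof r2. pose proof (sqrt_pos 2). split; nra. Qed.

Lemma floor_spec x : IZR (Defs.floor x) <= x < IZR (Defs.floor x) + 1.
Proof. unfold Defs.floor. destruct (base_Int_part x). lra. Qed.

Lemma floor_unique x N : IZR N <= x < IZR N + 1 -> Defs.floor x = N.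
Proof.
  intros [H1 H2]. destruct (floor_spec x) as [H3 H4].
  assert (A: (Defs.floor x - N < 1)%Z). { apply lt_IZR. rewrite minus_IZR. lra. }
  assert (B: (N - Defs.floor x < 1)%Z). { apply lt_IZR. rewrite minus_IZR. lra. }
  lia.
Qed.

Lemma x_not_int n N : INR n * a + b <> IZR N.
Proof.
  unfold a, b. intro H. pose proof r2 as R.
  set (r := sqrt 2) in *.
  rewrite INR_IZR_INZ in H. set (z := Z.of_nat n) in *.
  assert (H1 : r * IZR (2*z-1) = IZR (2*(N+z-1))).
  { repeat rewrite ?minus_IZR, ?mult_IZR, ?plus_IZR. lra. }
  assert (H2 : IZR (2*((2*z-1)*(2*z-1))) = IZR ((2*(N+z-1))*(2*(N+z-1)))).
  { rewrite (mult_IZR 2), (mult_IZR (2*(N+z-1))), <- H1, (mult_IZR (2*z-1)).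
    replace (r * IZR (2 * z - 1) * (r * IZR (2 * z - 1))) with
      (r*r * (IZR (2 * z - 1) * IZR (2 * z - 1))) by ring. rewrite R. ring. }
  apply eq_IZR in H2. lia.
Qed.

Lemma f_nonneg n : (0 <= fl n)%Z.
Proof.
  unfold fl. destruct (floor_spec (INR n * a + b)).
  assert (0 <= INR n) by apply pos_INR. pose proof rbounds. unfold a, b in *.
  assert (IZR (-1) < IZR (Defs.floor (INR n * (sqrt 2 - 1) + (1 - / 2 * sqrt 2)))) by nra.
  apply lt_IZR in H3. lia.
Qed.

Lemma INR_to_nat t : (0 <= t)%Z -> INR (Z.to_nat t) = IZR t.
Proof. intro. rewrite INR_IZR_INZ, Z2Nat.id; auto. Qed.

Lemma block j :
  let t := fl (S j) in
  let m := (2*j + 1 + Z.to_nat t)%nat in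
  fl m = Z.of_nat j /\ fl (S m) = Z.of_nat (S j) /\ fl (S (S m)) = Z.of_nat (S j) /\
  (fl (S (S j)) = (t + 1)%Z -> fl (S (S (S m))) = Z.of_nat (S j)).
Proof.
  intros t m.
  pose proof r2 as R. pose proof rbounds as RB.
  destruct (floor_spec (INR (S j) * a + b)) as [T1 T2].
  pose proof (x_not_int (S j) t) as NI.
  fold (fl (S j)) in T1, T2. fold t in T1, T2.
  assert (Hm : INR m = 2 * INR j + 1 + IZR t).
  { unfold m. rewrite !plus_INR, mult_INR, INR_to_nat by apply f_nonneg. simpl. lra. }
  assert (Hsj : INR (S j) = INR j + 1) by apply S_INR.
  rewrite Hsj in T1, T2, NI.
  unfold a, b in *.
  set (r := sqrt 2) in *. set (J := INR j) in *. set (T := IZR t) in *.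
  set (d := (J + 1) * (r - 1) + (1 - / 2 * r) - T).
  assert (d0 : 0 < d) by (unfold d; destruct (Rle_lt_or_eq_dec _ _ T1); lra).
  assert (d1 : d < 1) by (unfold d; lra).
  assert (E : (INR m) * (r - 1) + (1 - / 2 * r) = J + 1 - d * (r - 1)).
  { rewrite Hm. unfold d. assert ((J + /2) * (r*r - 2) = 0) by (rewrite R; ring). nra. }
  assert (Ej : IZR (Z.of_nat j) = J) by (rewrite <- INR_IZR_INZ; reflexivity).
  assert (Esj : IZR (Z.of_nat (S j)) = J + 1) by (rewrite <- INR_IZR_INZ; apply S_INR).
  unfold fl, a, b. fold r.
  repeat split.
  - apply floor_unique. rewrite Ej, E. nra.
  - apply floor_unique. rewrite Esj, S_INR. nra.
  - apply floor_unique. rewrite Esj, !S_INR. nra.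
  - intro H. apply floor_unique. rewrite Esj, !S_INR.
    destruct (floor_spec (INR (S (S j)) * (r - 1) + (1 - / 2 * r))) as [U1 U2].
    pose proof (x_not_int (S (S j)) (t+1)) as NI2.
    unfold a, b in NI2. fold r in NI2.
    rewrite H in U1. rewrite !S_INR in U1, NI2. fold J in U1, NI2. rewrite plus_IZR in U1, NI2. fold T in U1, NI2.
    assert (d > 2 - r) by (unfold d; destruct (Rle_lt_or_eq_dec _ _ U1); lra).
    nra.
Qed.

Lemma fl_step n : (fl (S n) - fl n = 0 \/ fl (S n) - fl n = 1)%Z.
Proof.
  unfold fl. destruct (floor_spec (INR (S n) * a + b)) as [A1 A2].
  destruct (floor_spec (INR n * a + b)) as [B1 B2].
  rewrite S_INR in A1, A2. pose proof rbounds. unfold a in *.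
  set (u := Defs.floor ((INR n + 1) * (sqrt 2 - 1) + b)) in *.
  set (v := Defs.floor (INR n * (sqrt 2 - 1) + b)) in *.
  assert (X: (u - v < 2)%Z) by (apply lt_IZR; rewrite minus_IZR; lra).
  assert (Y: (-1 < u - v)%Z) by (apply lt_IZR; rewrite minus_IZR; lra).
  rewrite S_INR. fold u. lia.
Qed.

Lemma St_fl n : St (sqrt 2 - 1) (1 - / 2 * sqrt 2) n = (fl (S n) - fl n)%Z.
Proof. reflexivity. Qed.

Definition sn (n : nat) : nat := Z.to_nat (fl (S n) - fl n).
Definition Sl (L : nat) : list nat := map (fun i => sn (S i)) (seq 0 L).
Definition Q (L : nat) : nat := (2 * L + Z.to_nat (fl (S L)))%nat.

Lemma Sl_add A B : Sl (A + B) = Sl A ++ map (fun i => sn (S i)) (seq A B).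
Proof. unfold Sl. rewrite seq_app, map_app. reflexivity. Qed.

Lemma fl1 : fl 1 = 0%Z.
Proof. unfold fl, a, b. apply floor_unique. pose proof rbounds. simpl. lra. Qed.
Lemma fl2 : fl 2 = 1%Z.
Proof. unfold fl, a, b. apply floor_unique. pose proof rbounds. simpl. lra. Qed.

Lemma psi_app u v : psi (u ++ v) = psi u ++ psi v.
Proof. unfold psi. apply flat_map_app. Qed.

Lemma main_list L : psi (Sl L) = Sl (Q L).
Proof.
  induction L as [|L IH].
  - unfold Q. rewrite fl1. reflexivity.
  - replace (S L) with (L + 1)%nat at 1 by lia.
    rewrite Sl_add, psi_app, IH.
    destruct (block L) as [B1 [B2 [B3 B4]]].
    set (t := fl (S L)) in *.
    pose proof (f_nonneg (S L)). pose proof (fl_step (S L)).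
    assert (QL: Q L = (2*L + Z.to_nat t)%nat) by reflexivity.
    assert (S1 : sn (S (Q L)) = 1%nat).
    { unfold sn. replace (S (Q L)) with (2*L+1+Z.to_nat t)%nat by lia.
      rewrite B2, B1. rewrite Nat2Z.inj_succ. replace (Z.succ (Z.of_nat L) - Z.of_nat L)%Z with 1%Z by lia. reflexivity. }
    assert (S2 : sn (S (S (Q L))) = 0%nat).
    { unfold sn. replace (S (Q L)) with (2*L+1+Z.to_nat t)%nat by lia.
      rewrite B2, B3. rewrite Z.sub_diag. reflexivity. }
    destruct H0 as [H0|H0].
    + assert (Q (S L) = Q L + 2)%nat.
      { unfold Q. replace (fl (S (S L))) with t by lia. fold t. lia. }
      assert (S0 : sn (S L) = 0%nat) by (unfold sn; rewrite H0; reflexivity).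
      rewrite H1, Sl_add. f_equal. cbn [seq map]. rewrite S0. unfold psi; cbn [flat_map psi_letter app].
      rewrite S1, S2. reflexivity.
    + assert (Q (S L) = Q L + 3)%nat.
      { unfold Q. replace (fl (S (S L))) with (t+1)%Z by lia. fold t. lia. }
      assert (S0 : sn (S L) = 1%nat) by (unfold sn; rewrite H0; reflexivity).
      assert (S3 : sn (S (S (S (Q L)))) = 0%nat).
      { unfold sn. replace (S (Q L)) with (2*L+1+Z.to_nat t)%nat by lia.
        rewrite B3, B4 by lia. rewrite Z.sub_diag. reflexivity. }
      rewrite H1, Sl_add. f_equal. cbn [seq map]. rewrite S0. unfold psi; cbn [flat_map psi_letter app].
      rewrite S1, S2, S3. reflexivity.
Qed.

Lemma iter_Sl k : exists L, psi_iter k = Sl L /\ (k + 1 <= L)%nat.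
Proof.
  induction k as [|k [L [HL Hk]]].
  - exists 1%nat. split; [|lia]. unfold Sl. simpl. unfold sn. rewrite fl1, fl2. reflexivity.
  - exists (Q L). split.
    + change (psi_iter (S k)) with (psi (psi_iter k)). rewrite HL. apply main_list.
    + unfold Q. lia.
Qed.

Lemma nth_ms (g : nat -> nat) i L d : (i < L)%nat -> nth i (map g (seq 0 L)) d = g i.
Proof.
  intro H. rewrite (nth_indep _ d (g 0%nat)) by (rewrite length_map, length_seq; lia).
  rewrite map_nth, seq_nth by lia. reflexivity.
Qed.

Theorem lemma2 : forall n : nat, (1 <= n)%nat ->
  Z.of_nat (w n) = St (sqrt 2 - 1) (1 - / 2 * sqrt 2) n.
Proof.
  intros n Hn. rewrite St_fl. unfold w.
  destruct (iter_Sl n) as [L [HL HnL]]. rewrite HL. unfold Sl.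
  rewrite nth_ms by lia.
  replace (S (n - 1)) with n by lia.
  unfold sn. rewrite Z2Nat.id; [reflexivity|]. destruct (fl_step n); lia.
Qed.
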